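(* With notation as in the context (type $E_6$ over $\mathbb{Z}/3$), let $\alpha$ be a positive root of $E_6$, let $s\in\{1,3,4,5,6\}$ and let $\beta\in\Delta_s^+$. Then $f(\beta)+f(\alpha)\in\Gamma_s^+$ if and only if $\beta+\alpha\in\Delta_s^+$.
   Context: Let $V=(\mathbb{Z}/3)^5$ with the standard symmetric form $\sum_i x_iy_i$. Let $\Delta$ be the root system of type $E_6$ with simple roots $\alpha_1,\dots,\alpha_6$, $\langle\alpha_i,\alpha_i\rangle=2$, $\langle\alpha_i,\alpha_j\rangle=-1$ if $\{i,j\}\in\{\{1,3\},\{3,4\},\{4,5\},\{5,6\},\{2,4\}\}$, $0$ otherwise; $\Lambda=\bigoplus\mathbb{Z}\alpha_i$, $\Delta^+$ the positive roots. Let $f:\Lambda\to V$ be the group homomorphism with $f(\alpha_1)=(1,2,0,0,0)$, $f(\alpha_2)=(0,0,0,1,2)$, $f(\alpha_3)=(0,1,2,0,0)$, $f(\alpha_4)=(0,0,1,2,0)$, $f(\alpha_5)=(0,0,0,1,1)$, $f(\alpha_6)=(1,1,1,1,1)$. For $\beta=\sum\beta^i\alpha_i\in\Delta^+$ let $m(\beta)=\max\{i:\beta^i\ne0\}$; set $\Delta_1^+=\{\alpha_1\}$, $\Delta_3^+=\{\beta: m(\beta)\in\{2,3\}\}$, $\Delta_s^+=\{\beta: m(\beta)=s\}$ for $s=4,5,6$, and $\Gamma_s^+=f(\Delta_s^+)$. *)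

(* Defs.v *)
From mathcomp Require Import all_boot all_order all_algebra.
Set Implicit Arguments. Unset Strict Implicit. Unset Printing Implicit Defensive.
Import Order.TTheory GRing.Theory Num.Theory.
Local Open Scope ring_scope.

(* Root lattice Lambda = (+)_{i=1..6} Z alpha_i, coordinates w.r.t. the simple
   roots; index i : 'I_6 (0-based) corresponds to alpha_{i+1}. *)
Definition Lam := {ffun 'I_6 -> int}.

Definition E6edge (i j : nat) : bool :=
  [|| (i == 1) && (j == 3), (i == 3) && (j == 4), (i == 4) && (j == 5),
      (i == 5) && (j == 6) | (i == 2) && (j == 4)]%N.

Definition cartan (i j : 'I_6) : int :=
  if i == j then 2
  else if E6edge i.+1 j.+1 || E6edge j.+1 i.+1 then -1 else 0.

Definition form (x y : Lam) : int :=
  \sum_(i < 6) \sum_(j < 6) x i * y j * cartan i j.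

Definition simple (i : 'I_6) : Lam := [ffun j => ((i == j) : nat)%:Z].

Definition refl (i : 'I_6) (x : Lam) : Lam := x - simple i *~ form x (simple i).

Inductive root : Lam -> Prop :=
| root_simple i : root (simple i)
| root_refl i x : root x -> root (refl i x).

Definition pos_root (x : Lam) : Prop := root x /\ forall i, 0 <= x i.

Definition mx (b : Lam) : nat := \max_(i < 6 | b i != 0) i.+1.

Definition Delta (s : nat) (b : Lam) : Prop :=
  pos_root b /\
  (if s == 1%N then b == simple ord0
   else if s == 3%N then (mx b == 2%N) || (mx b == 3%N)
   else mx b == s).

Definition V := 'rV['Z_3]_5.

Definition ftable : seq (seq nat) :=
  [:: [:: 1; 2; 0; 0; 0]%N;
      [:: 0; 0; 0; 1; 2]%N;
      [:: 0; 1; 2; 0; 0]%N;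
      [:: 0; 0; 1; 2; 0]%N;
      [:: 0; 0; 0; 1; 1]%N;
      [:: 1; 1; 1; 1; 1]%N].

Definition fsimple (i : 'I_6) : V :=
  \row_(j < 5) ((nth 0%N (nth [::] ftable i) j)%:R : 'Z_3).

Definition f (b : Lam) : V := \sum_(i < 6) fsimple i *~ b i.

Definition Gamma (s : nat) (v : V) : Prop := exists g, Delta s g /\ f g = v.

(* Main.v *)
Require Import Defs.
From mathcomp Require Import all_boot all_order all_algebra.
From mathcomp Require Import zify ring.
Import GRing.Theory.
Local Open Scope ring_scope.

Lemma form_def x y : Defs.form x y = \sum_(i < 6) \sum_(j < 6) x i * y j * cartan i j.
Proof. by []. Qed.

Definition cartanZ (i j : nat) : int :=
  if (i == j)%N then 2
  else if E6edge i.+1 j.+1 || E6edge j.+1 i.+1 then -1 else 0.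

Definition enc (c : seq int) : Lam := [ffun j : 'I_6 => nth 0 c j].

Definition cform (c : seq int) (i : nat) : int :=
  foldr (fun k acc => nth 0 c k * cartanZ k i + acc) 0 (iota 0 6).

Definition crefl (i : nat) (c : seq int) : seq int :=
  [seq nth 0 c k - ((k == i) : nat)%:Z * cform c i | k <- iota 0 6].

Lemma form_enc (i : 'I_6) a0 a1 a2 a3 a4 a5 :
  Defs.form (enc [:: a0; a1; a2; a3; a4; a5]) (simple i) = cform [:: a0; a1; a2; a3; a4; a5] i.
Proof.
rewrite form_def /cform.
rewrite !big_ord_recr /=.
rewrite !big_ord0 /= !ffunE /=.
case: i => [[|[|[|[|[|[|i]]]]]] Hi] //=; rewrite /cartan /cartanZ /=; ring.
Qed.

Lemma refl_enc (i : 'I_6) a0 a1 a2 a3 a4 a5 :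
  refl i (enc [:: a0; a1; a2; a3; a4; a5]) = enc (crefl i [:: a0; a1; a2; a3; a4; a5]).
Proof.
rewrite /refl form_enc; apply/ffunP => k.
rewrite !ffunE ffunMzE !ffunE.
rewrite mulrzz.
case: k => [[|[|[|[|[|[|k]]]]]] Hk] //=; case: i => [[|[|[|[|[|[|i]]]]]] Hi] //=; ring.
Qed.

Lemma enc_nth c : enc c = enc [:: nth 0 c 0; nth 0 c 1; nth 0 c 2; nth 0 c 3; nth 0 c 4; nth 0 c 5].
Proof. by apply/ffunP => k; rewrite !ffunE; case: k => [[|[|[|[|[|[|k]]]]]] Hk]. Qed.

Lemma refl_enc_gen (i : 'I_6) c : refl i (enc c) = enc (crefl i c).
Proof. by rewrite enc_nth refl_enc. Qed.

Definition simples : seq (seq int) :=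
  [seq [seq ((k == i) : nat)%:Z | k <- iota 0 6] | i <- iota 0 6].

Definition step (L : seq (seq int)) : seq (seq int) :=
  undup (L ++ flatten [seq [seq crefl i c | i <- iota 0 6] | c <- L]).

Definition R : seq (seq int) := Eval vm_compute in iter 12 step simples.
Lemma R_eq : R = iter 12 step simples.
Proof. by vm_compute. Qed.
Global Opaque R.

Lemma R_closed : all (fun c => all (fun i => crefl i c \in R) (iota 0 6)) R.
Proof. by vm_compute. Qed.

Lemma R_size : size R = 72.
Proof. by vm_compute. Qed.

Definition sv (i : nat) : seq int := [seq ((k == i) : nat)%:Z | k <- iota 0 6].

Lemma simple_enc (i : 'I_6) : simple i = enc (sv i).
Proof.
apply/ffunP => k; rewrite !ffunE.
by case: i => [[|[|[|[|[|[|i]]]]]] Hi] //; case: k => [[|[|[|[|[|[|k]]]]]] Hk].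
Qed.

Lemma simples_in_R i : (i < 6)%N -> sv i \in R.
Proof. by case: i => [|[|[|[|[|[|i]]]]]] //; vm_compute. Qed.

Lemma root_R x : Defs.root x -> exists2 c, c \in R & x = enc c.
Proof.
elim => [i|i y _ [c cR ->]].
  by exists (sv i); [apply: simples_in_R | apply: simple_enc].
exists (crefl i c); last exact: refl_enc_gen.
by move: (allP R_closed c cR) => /allP; apply; rewrite mem_iota /=; case: i => i Hi; rewrite Hi.
Qed.

Lemma iter_root k c : c \in iter k step simples -> Defs.root (enc c).
Proof.
elim: k c => [|k IH] c /=.
  move/mapP => [i]; rewrite mem_iota => /andP [_ Hi] ->.
  by rewrite -[i]/(val (Ordinal Hi)) -[[seq _ | _ <- _]]/(sv (Ordinal Hi)) -simple_enc; apply: Defs.root_simple.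
rewrite mem_undup mem_cat => /orP [/IH //|/flattenP [s /mapP [c' c'in ->]]].
move/mapP => [i]; rewrite mem_iota => /andP [_ Hi] ->.
rewrite -[i]/(val (Ordinal Hi)) -refl_enc_gen; apply: Defs.root_refl; exact: IH.
Qed.

Lemma R_root c : c \in R -> Defs.root (enc c).
Proof. by rewrite R_eq; apply: iter_root. Qed.

Lemma R_size6 : all (fun c => size c == 6%N) R.
Proof. by vm_compute. Qed.

Definition P : seq (seq nat) := Eval vm_compute in [seq map absz c | c <- R & all (fun z => 0 <= z) c].
Lemma P_eq : P = [seq map absz c | c <- R & all (fun z => 0 <= z) c].
Proof. by vm_compute. Qed.
Global Opaque P.
Definition encn (n : seq nat) : Lam := enc (map Posz n).

Lemma map_absz c : all (fun z => 0 <= z) c -> map Posz (map absz c) = c.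
Proof.
elim: c => //= a c IH /andP [Ha Hc]; rewrite IH //.
by case: a Ha.
Qed.

Lemma nth_Posz n k : nth 0 (map Posz n) k = Posz (nth 0%N n k).
Proof. by elim: n k => [|a n IH] [|k] //=. Qed.

Lemma encnE n k : encn n k = Posz (nth 0%N n k).
Proof. by rewrite /encn ffunE nth_Posz. Qed.

Lemma pos_P x : pos_root x -> exists2 n, n \in P & x = encn n.
Proof.
case=> /root_R [c cR ->] H.
have nn : all (fun z => 0 <= z) c.
  move: (allP R_size6 c cR) => /eqP.
  case: c {cR} H => [|a0 [|a1 [|a2 [|a3 [|a4 [|a5 [|? ?]]]]]]] //= H _.
  have := H (@Ordinal 6 0 isT); have := H (@Ordinal 6 1 isT); have := H (@Ordinal 6 2 isT).
  have := H (@Ordinal 6 3 isT); have := H (@Ordinal 6 4 isT); have := H (@Ordinal 6 5 isT).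
  by rewrite !ffunE /= => -> -> -> -> -> ->.
exists (map absz c); last by rewrite /encn map_absz.
by rewrite P_eq; apply/mapP; exists c => //; rewrite mem_filter nn.
Qed.

Lemma P_R n : n \in P -> map Posz n \in R.
Proof. by rewrite P_eq; case/mapP => c; rewrite mem_filter => /andP [nn cR] ->; rewrite map_absz. Qed.

Lemma P_pos n : n \in P -> pos_root (encn n).
Proof.
move=> /P_R H; split; first exact: R_root.
by move=> i; rewrite encnE.
Qed.

Definition cmx (n : seq nat) : nat :=
  foldr (fun k m => if nth 0%N n k != 0%N then maxn k.+1 m else m) 0%N (iota 0 6).

Lemma mx_def b : mx b = \max_(i < 6 | b i != 0) i.+1.
Proof. by []. Qed.

Lemma mx_encn a0 a1 a2 a3 a4 a5 :
  mx (encn [:: a0; a1; a2; a3; a4; a5]) = cmx [:: a0; a1; a2; a3; a4; a5].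
Proof.
rewrite mx_def big_mkcond /= !big_ord_recr big_ord0 /= !encnE /=.
by case: a0 => [|?]; case: a1 => [|?]; case: a2 => [|?]; case: a3 => [|?];
   case: a4 => [|?]; case: a5 => [|?].
Qed.

Lemma P_size n : n \in P -> size n = 6%N.
Proof. by move=> /P_R /(allP R_size6) /eqP; rewrite size_map. Qed.

Lemma encn_inj n m : size n = 6%N -> size m = 6%N -> encn n = encn m -> n = m.
Proof.
case: n => [|a0 [|a1 [|a2 [|a3 [|a4 [|a5 [|? ?]]]]]]] //= _.
case: m => [|b0 [|b1 [|b2 [|b3 [|b4 [|b5 [|? ?]]]]]]] //= _ /ffunP H.
have := H (@Ordinal 6 0 isT); have := H (@Ordinal 6 1 isT); have := H (@Ordinal 6 2 isT).
have := H (@Ordinal 6 3 isT); have := H (@Ordinal 6 4 isT); have := H (@Ordinal 6 5 isT).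
by rewrite !encnE /= => [[->]] [->] [->] [->] [->] [->].
Qed.

Definition cDelta (s : nat) (n : seq nat) : bool :=
  if s == 1%N then n == [:: 1; 0; 0; 0; 0; 0]%N
  else if s == 3%N then (cmx n == 2%N) || (cmx n == 3%N)
  else cmx n == s.

Lemma Delta_encn s n : n \in P -> Delta s (encn n) <-> cDelta s n.
Proof.
move=> nP; have sz := @P_size n nP; rewrite /Delta /cDelta.
have -> : mx (encn n) = cmx n.
  by move: nP sz; case: n => [|a0 [|a1 [|a2 [|a3 [|a4 [|a5 [|? ?]]]]]]] //= _ _; rewrite mx_encn.
have -> : (encn n == simple ord0) = (n == [:: 1; 0; 0; 0; 0; 0]%N).
  have -> : simple ord0 = encn [:: 1; 0; 0; 0; 0; 0]%N.
    by apply/ffunP => k; rewrite encnE ffunE; case: k => [[|[|[|[|[|[|k]]]]]] Hk].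
  by apply/eqP/eqP => [/encn_inj|->] //; apply.
by split => [[]|] //; split => //; apply: P_pos.
Qed.

Definition S (j : nat) (n : seq nat) : nat :=
  foldr (fun k acc => nth 0 n k * nth 0 (nth [::] ftable k) j + acc)%N 0%N (iota 0 6).

Lemma f_def b : f b = \sum_(i < 6) fsimple i *~ b i.
Proof. by []. Qed.

Lemma mulrzP (M : zmodType) (x : M) (n : nat) : x *~ Posz n = x *+ n.
Proof. by []. Qed.

Lemma f_coord a0 a1 a2 a3 a4 a5 (j : 'I_5) :
  f (encn [:: a0; a1; a2; a3; a4; a5]) ord0 j = (S j [:: a0; a1; a2; a3; a4; a5])%:R.
Proof.
rewrite f_def summxE !big_ord_recr big_ord0 /= !encnE /= !mulrzP !mulmxnE !mxE.
rewrite add0r -!mulrnA -!natrD. congr (_%:R). rewrite /S /=. ring.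
Qed.

Lemma f_coordP n (j : 'I_5) : size n = 6%N -> f (encn n) ord0 j = (S j n)%:R.
Proof.
by case: n => [|a0 [|a1 [|a2 [|a3 [|a4 [|a5 [|? ?]]]]]]] //= _; rewrite f_coord.
Qed.

Lemma Z3_eq (m k : nat) : (m%:R : 'Z_3) = k%:R -> (m %% 3 = k %% 3)%N.
Proof. by move/(congr1 val); rewrite !Zp_nat. Qed.

Lemma fD x y : f (x + y) = f x + f y.
Proof.
rewrite !f_def -big_split; apply: eq_bigr => i _.
by rewrite ffunE mulrzDr.
Qed.

Definition addl (b a : seq nat) : seq nat := [seq nth 0 b k + nth 0 a k | k <- iota 0 6]%N.

Lemma encn_add b a : encn b + encn a = encn (addl b a).
Proof.
apply/ffunP => k; rewrite ffunE !encnE.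
by case: k => [[|[|[|[|[|[|k]]]]]] Hk].
Qed.

Definition chk : bool :=
  all (fun s => all (fun a => all (fun b => cDelta s b ==>
     has (fun g => cDelta s g && all (fun j => S j g %% 3 == (S j b + S j a) %% 3)%N (iota 0 5)) P ==>
     (addl b a \in P) && cDelta s (addl b a)) P) P) [:: 1; 3; 4; 5; 6]%N.

Lemma chk_ok : chk.
Proof. by vm_compute. Qed.

Theorem mainTheorem17 (s : nat) (alpha beta : Lam) :
  s \in [:: 1; 3; 4; 5; 6]%N ->
  pos_root alpha ->
  Delta s beta ->
  (Gamma s (f beta + f alpha) <-> Delta s (beta + alpha)).
Proof.
move=> Hs /pos_P [a aP ->] Hb.
have [b bP Eb] := @pos_P _ Hb.1; subst beta.
have cb : cDelta s b by apply/(@Delta_encn s b bP).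
rewrite -fD encn_add; split; last by move=> H; exists (encn (addl b a)).
case=> g [Hg Hfg].
have [gn gP Eg] := @pos_P _ Hg.1; subst g.
have cg : cDelta s gn by apply/(@Delta_encn s gn gP).
have := allP (allP (allP chk_ok s Hs) a aP) b bP.
rewrite cb implyTb => /implyP H.
have Hj : forall j, (j < 5)%N -> (S j gn %% 3 == (S j b + S j a) %% 3)%N.
  move=> j Hj; move: Hfg; rewrite -encn_add fD => /matrixP /(_ ord0 (Ordinal Hj)).
  by rewrite mxE !f_coordP ?(@P_size gn) ?(@P_size b) ?(@P_size a) // -natrD => /Z3_eq ->.
have /andP [HP Hc] : (addl b a \in P) && cDelta s (addl b a).
  apply: H; apply/hasP; exists gn; first exact: gP.
  rewrite cg andTb; apply/allP => j; rewrite mem_iota => /andP [_ Hj2]; exact: Hj.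
by apply/(@Delta_encn s _ HP).
Qed.
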